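(* Let $H\in\mathbb{N}$, $K_p\in\mathbb{R}^{m_p\times n_p}$, $L_p\in\mathbb{R}^{n_p\times q_p}$, $\Psi_p\subseteq\mathbb{R}^{n_p}$, and let $\Omega_p\subseteq\mathbb{R}^{n_p}$ be a set containing the origin such that for all $i\in\{1,\dots,H\}$ $$(A_p^i+B_p^iK_p)\Omega_p\oplus\Big(\bigoplus_{j=0}^{i-1}A_p^jL_p(C_p\Psi_p\oplus\mathbb{V}_p)\Big)\subseteq\Omega_p,$$ where $B_p^i:=\sum_{j=0}^{i-1}A_p^jB_p$. Then with $\mu(\bar\nu_c,\hat x_p,\bar x_p):=\bar\nu_c+K_p(\hat x_p-\bar x_p)$ and $\eta(\hat x_p,\tilde x_p,\bar x_p):=0$ (''ZOH actuator''), the set $\Omega:=\Omega_p\times K_p\Omega_p\times\{0\}$ is $[1,H]$ RCI for the control error $e$.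
   Context: Setting. $A_p\in\mathbb{R}^{n_p\times n_p}$, $B_p\in\mathbb{R}^{n_p\times m_p}$, $C_p\in\mathbb{R}^{q_p\times n_p}$; $\mathbb{X}_p,\mathbb{U}_p$ closed sets containing the origin; $\mathbb{V}_p\subseteq\mathbb{R}^{q_p}$ compact convex containing the origin; integers $g\ge1$, $c\ge g$, $b\ge c$. Overall state $x=(x_p,u_s,\beta)\in\mathbb{R}^{n_p}\times\mathbb{R}^{m_p}\times\mathbb{R}$, input $u=(u_c,\gamma,u_e)\in\mathbb{R}^{m_p}\times\{0,1\}\times\mathbb{R}^{m_p}$, $$f(x,u):=\begin{bmatrix}A_px_p+B_p((1-\gamma)u_s+\gamma u_c+u_e)\\ (1-\gamma)u_s+\gamma u_c\\ \min\{\beta+g-\gamma c,\,b\}\end{bmatrix},$$ $\mathbb{X}:=\mathbb{X}_p\times\mathbb{U}_p\times\{0,\dots,b\}$, and $\Delta:=L_p(C_p\Psi_p\oplus\mathbb{V}_p)\times\{0\}\times\{0\}$. $[1,H]$ RCI sets. Given functions $\mu:\mathbb{R}^{m_p}\times\mathbb{R}^{n_p}\times\mathbb{R}^{n_p}\to\mathbb{R}^{m_p}$ and $\eta:\mathbb{R}^{n_p}\times\mathbb{R}^{n_p}\times\mathbb{R}^{n_p}\to\mathbb{R}^{m_p}$, define for $\bar\nu=(\bar\nu_c,\bar\gamma,\cdot)$ $\phi'(\bar\nu,\hat x,\tilde x,\bar x):=(\mu(\bar\nu_c,\hat x_p,\bar x_p),\,1,\,\eta(\hat x_p,\tilde x_p,\bar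 x_p))$ and $\phi''(\bar\nu,\hat x,\tilde x,\bar x):=(0,\,0,\,\eta(\hat x_p,\tilde x_p,\bar x_p))$. Given initial states $\hat x(0),\tilde x(0),\bar x(0)$, $\bar\nu_c(0)\in\mathbb{U}_p$ and $\delta(0),\dots,\delta(H-1)\in\Delta$, let $\bar\nu(0):=(\bar\nu_c(0),1,0)$, $\bar\nu(i):=(0,0,0)$ for $i\ge1$, and define for $i=0,\dots,H-1$: $\bar x(i+1)=f(\bar x(i),\bar\nu(i))$, $\tilde x(i+1)=f(\tilde x(i),u(i))$, $\hat x(i+1)=f(\hat x(i),u(i))+\delta(i)$, where $u(0)=\phi'(\bar\nu(0),\hat x(0),\tilde x(0),\bar x(0))$ and $u(i)=\phi''(\bar\nu(i),\hat x(i),\tilde x(i),\bar x(i))$ for $i\ge1$. The control error is $e(i):=\hat x(i)-\bar x(i)$. A set $\Omega\subseteq\mathbb{R}^{n_p+m_p+1}$ is called $[1,H]$ RCI for the control error $e$ (with these $\mu,\eta$) if for all $\hat x(0),\tilde x(0),\bar x(0)\in\mathbb{X}$ with $\tilde x(0)=\hat x(0)$ and $e(0)\in\Omega$, all $\bar\nu_c(0)\in\mathbb{U}_p$ and all $(\delta(i))_{i=0}^{H-1}\in\Delta^H$, it holds $e(i)\in\Omega$ for all $i\in\{1,\dots,H\}$. *)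

(* Defs.v *)
From HB Require Import structures.
From mathcomp Require Import all_boot all_order all_algebra.
From mathcomp Require Import all_classical all_reals all_analysis.
Set Implicit Arguments. Unset Strict Implicit. Unset Printing Implicit Defensive.
Import Order.TTheory GRing.Theory Num.Theory.
Import numFieldNormedType.Exports.
Local Open Scope classical_set_scope.
Local Open Scope ring_scope.

Section Defs.
Variable R : realType.
Variables np mp qp : nat.

Definition minksum (k : nat) (S T : set 'cV[R]_k) : set 'cV[R]_k :=
  [set s + t | s in S & t in T].
Definition mximg (k l : nat) (M : 'M[R]_(k, l)) (S : set 'cV[R]_l) : set 'cV[R]_k :=
  [set M *m s | s in S].
Definition bigminksum (k : nat) (i : nat) (F : nat -> set 'cV[R]_k) : set 'cV[R]_k :=
  \big[@minksum k/[set 0]]_(0 <= j < i) F j.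

(* overall state x = (x_p, u_s, beta), input u = (u_c, gamma, u_e) *)
Definition state := ('cV[R]_np * 'cV[R]_mp * R)%type.
Definition input := ('cV[R]_mp * bool * 'cV[R]_mp)%type.

Definition xp (x : state) := x.1.1.
Definition us (x : state) := x.1.2.
Definition beta (x : state) := x.2.

Definition f (Ap : 'M[R]_np) (Bp : 'M[R]_(np, mp)) (g c b : nat)
    (x : state) (u : input) : state :=
  let: (uc, gam, ue) := u in
  let usn := (1 - (gam%:R : R)) *: us x + (gam%:R : R) *: uc in
  (Ap *m xp x + Bp *m (usn + ue), usn,
   Num.min (beta x + g%:R - (gam%:R : R) * c%:R) b%:R).

Definition Xset (Xp : set 'cV[R]_np) (Up : set 'cV[R]_mp) (b : nat) : set state :=
  [set x | Xp (xp x) /\ Up (us x) /\ exists k : nat, (k <= b)%N /\ beta x = k%:R].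

Definition Wset (Cp : 'M[R]_(qp, np)) (Lp : 'M[R]_(np, qp))
    (Psip : set 'cV[R]_np) (Vp : set 'cV[R]_qp) : set 'cV[R]_np :=
  mximg Lp (minksum (mximg Cp Psip) Vp).

Definition Delta Cp Lp Psip Vp : set state :=
  [set d | Wset Cp Lp Psip Vp (xp d) /\ us d = 0 /\ beta d = 0].

Definition phi' (mu : 'cV[R]_mp -> 'cV[R]_np -> 'cV[R]_np -> 'cV[R]_mp)
    (eta : 'cV[R]_np -> 'cV[R]_np -> 'cV[R]_np -> 'cV[R]_mp)
    (nu : input) (xh xt xb : state) : input :=
  (mu nu.1.1 (xp xh) (xp xb), true, eta (xp xh) (xp xt) (xp xb)).
Definition phi'' (mu : 'cV[R]_mp -> 'cV[R]_np -> 'cV[R]_np -> 'cV[R]_mp)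
    (eta : 'cV[R]_np -> 'cV[R]_np -> 'cV[R]_np -> 'cV[R]_mp)
    (nu : input) (xh xt xb : state) : input :=
  (0, false, eta (xp xh) (xp xt) (xp xb)).

Definition nubar (nuc0 : 'cV[R]_mp) (i : nat) : input :=
  if i is 0 then (nuc0, true, 0) else (0, false, 0).

Fixpoint traj Ap Bp g c b mu eta (xh0 xt0 xb0 : state) (nuc0 : 'cV[R]_mp)
    (delta : nat -> state) (i : nat) : state * state * state :=
  match i with
  | 0 => (xh0, xt0, xb0)
  | i'.+1 =>
    let: (xh, xt, xb) := traj Ap Bp g c b mu eta xh0 xt0 xb0 nuc0 delta i' in
    let nu := nubar nuc0 i' in
    let u := if i' is 0 then phi' mu eta nu xh xt xb
             else phi'' mu eta nu xh xt xb in
    (f Ap Bp g c b xh u + delta i', f Ap Bp g c b xt u, f Ap Bp g c b xb nu)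
  end.

Definition ctrl_err Ap Bp g c b mu eta xh0 xt0 xb0 nuc0 delta (i : nat) : state :=
  let: (xh, _, xb) := traj Ap Bp g c b mu eta xh0 xt0 xb0 nuc0 delta i in xh - xb.

Definition RCI_1H (Ap : 'M[R]_np) (Bp : 'M[R]_(np, mp)) (Cp : 'M[R]_(qp, np))
    (Lp : 'M[R]_(np, qp)) (Psip : set 'cV[R]_np) (Vp : set 'cV[R]_qp)
    (Xp : set 'cV[R]_np) (Up : set 'cV[R]_mp) (g c b H : nat)
    mu eta (Omega : set state) : Prop :=
  forall xh0 xt0 xb0 : state,
    Xset Xp Up b xh0 -> Xset Xp Up b xt0 -> Xset Xp Up b xb0 ->
    xt0 = xh0 -> Omega (xh0 - xb0) ->
  forall nuc0 : 'cV[R]_mp, Up nuc0 ->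
  forall delta : nat -> state, (forall i, (i < H)%N -> Delta Cp Lp Psip Vp (delta i)) ->
  forall i, (1 <= i <= H)%N ->
    Omega (ctrl_err Ap Bp g c b mu eta xh0 xt0 xb0 nuc0 delta i).

End Defs.

(* Main.v *)
Require Import Defs.
From HB Require Import structures.
From mathcomp Require Import all_boot all_order all_algebra.
From mathcomp Require Import all_classical all_reals all_analysis.
Import Order.TTheory GRing.Theory Num.Theory.
Import numFieldNormedType.Exports.
Local Open Scope classical_set_scope.
Local Open Scope ring_scope.

Lemma bigminksum_seq (R : realType) k (F : nat -> set 'cV[R]_k) (a : nat -> 'cV[R]_k) s :
  (forall j, j \in s -> F j (a j)) ->
  (\big[@minksum R k/[set 0]]_(j <- s) F j) (\sum_(j <- s) a j).
Proof.
elim: s => [|x s IH] Hs; first by rewrite !big_nil.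
rewrite !big_cons; exists (a x); first by apply: Hs; rewrite mem_head.
exists (\sum_(j <- s) a j) => //; apply: IH => j Hj; apply: Hs.
by rewrite in_cons Hj orbT.
Qed.

Lemma zmod_id1 (V : zmodType) (a a' n k d : V) :
  a + (n + k) + d - (a' + n) = a - a' + k + d.
Proof.
rewrite (addrC a' n) opprD (addrC n k) !addrA (addrAC (a+k) n d) addrK.
by rewrite addrAC (addrAC a k).
Qed.

Lemma zmod_id2 (V : zmodType) (a a' b b' d : V) :
  a + b + d - (a' + b') = a - a' + (b - b') + d.
Proof.
by rewrite opprD !addrA (addrAC _ d (-a')) (addrAC _ d (-b')) (addrAC a b (-a')).
Qed.

Lemma sumA (R : realType) n k (A : 'M[R]_n) (F : nat -> 'M[R]_(n,k)) m :
  \sum_(0 <= j < m) A ^+ j.+1 *m F j = A *m \sum_(0 <= j < m) A ^+ j *m F j.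
Proof.
rewrite mulmx_sumr; apply: eq_bigr => j _; by rewrite exprS -mulmxE mulmxA.
Qed.

Lemma step_id (R : comRingType) n m (A P : 'M[R]_n) (B S : 'M[R]_(n,m)) (K : 'M[R]_(m,n))
  (E W w : 'cV[R]_n) :
  A *m ((P + S *m K) *m E + W) + B *m (K *m E) + w =
  (A *m P + (B + A *m S) *m K) *m E + (w + A *m W).
Proof.
rewrite !(mulmxDr, mulmxDl) !mulmxA.
set a := A *m P *m E; set b := A *m S *m K *m E; set c := A *m W; set d := B *m K *m E.
by rewrite -!addrA (addrCA c d) (addrCA b d) (addrC c w).
Qed.

Lemma trajS (R : realType) (np mp : nat) Ap Bp g c b mu eta
  (xh0 xt0 xb0 : state R np mp) nuc0 delta i :
  traj Ap Bp g c b mu eta xh0 xt0 xb0 nuc0 delta i.+2 =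
  let: (xh, xt, xb) := traj Ap Bp g c b mu eta xh0 xt0 xb0 nuc0 delta i.+1 in
  (f Ap Bp g c b xh (0, false, eta (xp xh) (xp xt) (xp xb)) + delta i.+1,
   f Ap Bp g c b xt (0, false, eta (xp xh) (xp xt) (xp xb)),
   f Ap Bp g c b xb (0, false, 0)).
Proof. by []. Qed.

Lemma traj_inv (R : realType) (np mp qp : nat) (H : nat)
  (Ap : 'M[R]_np) (Bp : 'M[R]_(np, mp)) (g c b : nat) (Kp : 'M[R]_(mp, np))
  xh0 xt0 xb0 nuc0 (delta : nat -> state R np mp) :
  beta xh0 = beta xb0 ->
  (forall i, (i < H)%N -> us (delta i) = 0 /\ beta (delta i) = 0) ->
  forall i, (1 <= i <= H)%N ->
  let: (xh, xt, xb) := traj Ap Bp g c b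
    (fun nuc xh xb => nuc + Kp *m (xh - xb)) (fun _ _ _ => 0)
    xh0 xt0 xb0 nuc0 delta i in
  xp xh - xp xb = (Ap ^+ i + (\sum_(0 <= j < i) Ap ^+ j *m Bp) *m Kp) *m (xp xh0 - xp xb0)
     + \sum_(0 <= j < i) Ap ^+ j *m xp (delta (i.-1 - j)%N)
  /\ us xh - us xb = Kp *m (xp xh0 - xp xb0) /\ beta xh = beta xb.
Proof.
move=> Hb0 Hd; elim=> [//|[|i] IH] /andP[_ HiH].
- rewrite /=. have [Hu Hbe] := Hd 0%N HiH.
  rewrite /f /xp /us /beta /= in Hb0 Hu Hbe *.
  rewrite !big_nat1 subrr !scale0r !scale1r !add0r !addr0 expr1 expr0 mul1mx Hu Hbe Hb0 addr0.
  split; last split; last by rewrite addr0.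
    rewrite mulmxDl mulmxBr mulmxDr zmod_id1 -!mulmxBr -mulmxA sub0n mul1mx //.
  by rewrite addrAC subrr add0r.
- rewrite trajS; move: IH.
  case: (traj _ _ _ _ _ _ _ _ _ _ _ _ i.+1) => [[xh xt] xb] /(_ (ltnW HiH)) [Ex [Eu Eb]].
  have [Hu Hbe] := Hd i.+1 HiH.
  rewrite /f /xp /us /beta /= in Ex Eu Eb Hu Hbe *.
  rewrite !subr0 !scale1r !scale0r !addr0 Hu Hbe Eb addr0.
  split; last split; last by rewrite addr0.
    rewrite zmod_id2 -!mulmxBr Ex Eu.
  rewrite !(big_nat_recl i.+1) // expr0 !mul1mx subn0.
  have -> : \sum_(0 <= j < i.+1) Ap ^+ j.+1 *m (delta (i.+1 - j.+1)%N).1.1 =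
     \sum_(0 <= j < i.+1) Ap ^+ j.+1 *m (delta (i - j)%N).1.1.
    by apply: eq_bigr => j _; rewrite subSS.
  rewrite !sumA [Ap ^+ i.+2]exprS -mulmxE.
  exact: step_id.
  exact: Eu.
Qed.

Theorem lemma2 (R : realType) (np mp qp : nat)
  (Ap : 'M[R]_np) (Bp : 'M[R]_(np, mp)) (Cp : 'M[R]_(qp, np))
  (Xp : set 'cV[R]_np) (Up : set 'cV[R]_mp) (Vp : set 'cV[R]_qp)
  (g c b : nat)
  (HXp : closed Xp) (HXp0 : Xp 0) (HUp : closed Up) (HUp0 : Up 0)
  (HVp : compact Vp) (HVpc : convex_set (Vp : set (convex_lmodType 'cV[R]_qp)))
  (HVp0 : Vp 0)
  (Hg : (1 <= g)%N) (Hc : (g <= c)%N) (Hb : (c <= b)%N)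
  (H : nat) (Kp : 'M[R]_(mp, np)) (Lp : 'M[R]_(np, qp))
  (Psip : set 'cV[R]_np) (Omegap : set 'cV[R]_np) (HO0 : Omegap 0)
  (HOmega : forall i : nat, (1 <= i <= H)%N ->
     minksum (mximg (Ap ^+ i + (\sum_(0 <= j < i) Ap ^+ j *m Bp) *m Kp) Omegap)
          (bigminksum i (fun j => mximg (Ap ^+ j) (Wset Cp Lp Psip Vp)))
     `<=` Omegap) :
  RCI_1H Ap Bp Cp Lp Psip Vp Xp Up g c b H
    (fun nuc xh xb => nuc + Kp *m (xh - xb))
    (fun _ _ _ => 0)
    [set e | Omegap (xp e) /\ mximg Kp Omegap (us e) /\ beta e = 0].
Proof.
move=> xh0 xt0 xb0 _ _ _ _ [He0 [_ Eb0]] nuc0 _ delta Hdel i Hi.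
have Hd : forall k, (k < H)%N -> us (delta k) = 0 /\ beta (delta k) = 0.
  by move=> k Hk; have [_ [? ?]] := Hdel k Hk.
have Hb0 : beta xh0 = beta xb0 by apply/eqP; rewrite -subr_eq0; apply/eqP.
have := @traj_inv R np mp qp H Ap Bp g c b Kp xh0 xt0 xb0 nuc0 delta Hb0 Hd i Hi.
rewrite /ctrl_err; case: traj => [[xh xt] xb] [Ex [Eu Eb]].
split; last split.
- have -> : xp (xh - xb) = xp xh - xp xb by [].
  rewrite Ex; apply: (HOmega i Hi).
  exists ((Ap ^+ i + (\sum_(0 <= j < i) Ap ^+ j *m Bp) *m Kp) *m (xp xh0 - xp xb0)).
    by exists (xp xh0 - xp xb0).
  exists (\sum_(0 <= j < i) Ap ^+ j *m xp (delta (i.-1 - j)%N)) => //.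
  apply: bigminksum_seq => j; rewrite mem_index_iota => /andP[_ Hj].
  exists (xp (delta (i.-1 - j)%N)) => //.
  have Hlt : (i.-1 - j < H)%N.
    case/andP: Hi => Hi1 HiH; apply: leq_trans HiH.
    by apply: leq_ltn_trans (leq_subr j i.-1) _; rewrite ltn_predL.
  by have [HW _] := Hdel _ Hlt.
- have -> : us (xh - xb) = us xh - us xb by [].
  by rewrite Eu; exists (xp xh0 - xp xb0).
- have -> : beta (xh - xb) = beta xh - beta xb by [].
  by rewrite Eb subrr.
Qed.
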